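(* Let $m, n$ be positive integers, let $f: V(H_{n,m}) \rightarrow \{-1,1\}$ be a function, and let $q = \frac{f(V(H_{n,m}))}{n}$ and $k = \lceil q \rceil$. Then $H_{n,m}$ can be decomposed into $n$ vertex-disjoint directed $m$-paths $P_1, \ldots, P_n$ with \[ f(V(P_j)) \in \begin{cases} \{k - 2, k\}, & \text{if } m \equiv k \pmod 2,\\ \{k-1, k+1\}, & \text{if } m \not\equiv k \pmod 2, \end{cases} \] for all $1 \le j \le n$.
   Context: For a set $Y$ of vertices, $f(Y)=\sum_{y\in Y}f(y)$. $H_{n,m}$ is the directed graph whose vertex set is the disjoint union of $V_1,\dots,V_m$ with $|V_i|=n$, and whose arc set is $\bigcup_{i=1}^{m-1}\{(v,w): v\in V_i, w\in V_{i+1}\}$. A directed $m$-path is a directed path with $m$ vertices. *)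

(* Defs.v *)
From mathcomp Require Import all_boot all_order all_algebra.
Set Implicit Arguments. Unset Strict Implicit. Unset Printing Implicit Defensive.
Import Order.TTheory GRing.Theory Num.Theory.

(* Vertices of H_{n,m}: pairs (i, x) meaning vertex x of layer V_{i+1}
   (layers indexed 0..m-1, each of size n). *)
Definition Hvert (n m : nat) : finType := ('I_m * 'I_n)%type.

Definition Harc (n m : nat) : rel (Hvert n m) :=
  fun v w => (nat_of_ord v.1).+1 == nat_of_ord w.1.

Definition is_dpath (n m k : nat) (p : seq (Hvert n m)) : bool :=
  [&& size p == k, uniq p & sorted (@Harc n m) p].

Definition dpath_decomposition (n m : nat) (P : 'I_n -> seq (Hvert n m)) : Prop :=
  [/\ forall j, is_dpath m (P j),
      forall j j' v, j != j' -> v \in P j -> v \notin P j'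
    & forall v : Hvert n m, exists j, v \in P j].

(* Main.v *)
Require Import Defs.
From mathcomp Require Import all_boot all_order all_algebra.
From mathcomp Require Import zify.
Set Warnings "-notation-overridden,-ambiguous-paths".
Set Implicit Arguments. Unset Strict Implicit. Unset Printing Implicit Defensive.
Import Order.TTheory GRing.Theory Num.Theory.

Definition mseqA (T : finType) (A : {set T}) := enum A ++ enum (~: A).
Definition mfun (T : finType) (A B : {set T}) (x : T) : T :=
  nth x (mseqA B) (index x (mseqA A)).

Lemma size_mseqA (T : finType) (A : {set T}) : size (mseqA A) = #|T|.
Proof. by rewrite /mseqA size_cat -!cardE cardsC. Qed.

Lemma mem_mseqA (T : finType) (A : {set T}) x : x \in mseqA A.
Proof. by rewrite /mseqA mem_cat !mem_enum in_setC; case: (x \in A). Qed.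

Lemma uniq_mseqA (T : finType) (A : {set T}) : uniq (mseqA A).
Proof.
rewrite /mseqA cat_uniq !enum_uniq /= andbT.
by apply/hasPn => x; rewrite !mem_enum in_setC.
Qed.

Lemma mfun_inj (T : finType) (A B : {set T}) : injective (mfun A B).
Proof.
move=> x y; rewrite /mfun.
have Hx : (index x (mseqA A) < size (mseqA B))%N by rewrite size_mseqA -(size_mseqA A) index_mem mem_mseqA.
have Hy : (index y (mseqA A) < size (mseqA B))%N by rewrite size_mseqA -(size_mseqA A) index_mem mem_mseqA.
rewrite (set_nth_default y x Hx) => /eqP; rewrite nth_uniq ?uniq_mseqA // => /eqP.
by apply: (@index_inj _ x (mseqA A)); apply: mem_mseqA.
Qed.

Lemma mfun_mem (T : finType) (A B : {set T}) x : #|A| = #|B| ->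
  (mfun A B x \in B) = (x \in A).
Proof.
move=> hAB.
have hC : #|~: A| = #|~: B| by apply/eqP; rewrite -(eqn_add2l #|A|) cardsC {1}hAB cardsC.
rewrite /mfun /mseqA index_cat mem_enum nth_cat -!cardE.
case xA: (x \in A).
  have hi : (index x (enum A) < #|B|)%N by rewrite -hAB cardE index_mem mem_enum.
  by rewrite hi; rewrite -mem_enum; apply: mem_nth; rewrite -cardE.
rewrite hAB ltnNge leq_addr /= addKn.
have hi : (index x (enum (~: A)) < #|~: B|)%N by rewrite -hC cardE index_mem mem_enum in_setC xA.
have : nth x (enum (~: B)) (index x (enum (~: A))) \in ~: B.
  by rewrite -mem_enum; apply: mem_nth; rewrite -cardE.
by rewrite in_setC => /negbTE.
Qed.
Definition Rseq n (hn : (0 < n)%N) (c p : nat) : seq 'I_n :=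
  map (fun x => Ordinal (ltn_pmod x hn)) (iota c p).

Lemma uniq_Rseq n (hn : (0 < n)%N) c p : (p <= n)%N -> uniq (Rseq hn c p).
Proof.
move=> hp; rewrite /Rseq map_inj_in_uniq ?iota_uniq //.
move=> x y; rewrite !mem_iota => /andP[hx1 hx2] /andP[hy1 hy2] /(congr1 val) /= hxy.
have ex := divn_eq x n; have ey := divn_eq y n.
move: ex ey; rewrite hxy; set r := y %% n; set a := x %/ n; set b := y %/ n => ex ey.
case: (ltngtP a b) => h.
- have := leq_mul h (leqnn n); lia.
- have := leq_mul h (leqnn n); lia.
- rewrite ex ey h; lia.
Qed.

Lemma card_Rseq n (hn : (0 < n)%N) c p : (p <= n)%N ->
  #|[set j in Rseq hn c p]| = p.
Proof.
move=> hp; rewrite cardsE; move/card_uniqP: (uniq_Rseq hn c hp) => ->.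
by rewrite size_map size_iota.
Qed.

Lemma mem_Rseq n (hn : (0 < n)%N) c p (j : 'I_n) : (p <= n)%N ->
  nat_of_bool (j \in Rseq hn c p) = count (fun x => x %% n == j) (iota c p).
Proof.
move=> hp; rewrite -count_uniq_mem ?uniq_Rseq // /Rseq count_map.
by apply: eq_count => x /=.
Qed.

Lemma count_mod n (j : nat) C : (0 < n)%N -> (j < n)%N ->
  count (fun x => x %% n == j) (iota 0 C) = (C %/ n + (j < C %% n))%N.
Proof.
move=> hn hj; elim: C => [|C IH]; first by rewrite div0n mod0n.
rewrite -addn1 iotaD count_cat IH /= addn0 add0n addn1 divnS // modnS.
have hC := ltn_pmod C hn.
case: (boolP (n %| C.+1)) => hd /=.
  have e : (C %% n = n.-1)%N.
    move: hd; rewrite /dvdn -addn1 -modnDml.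
    case: (ltnP (C %% n + 1) n) => h1; first by rewrite modn_small // addn1.
    move=> _; lia.
  rewrite e; lia.
lia.
Qed.

Local Open Scope ring_scope.

Lemma sum_aux (I : finType) (F : I -> nat) (a c : int) :
  \sum_(i : I) ((F i)%:Z * a - c) = (\sum_i F i)%N%:Z * a - c *+ #|I|.
Proof.
rewrite sumrB -mulr_suml sumr_const; congr (_ * _ - _).
by rewrite (big_morph Posz PoszD (erefl _)).
Qed.

Lemma iota_succ a b : sorted (fun x y => x.+1 == y) (iota a b).
Proof.
elim: b a => [|b IH] a //=; case: b IH => // b IH /=.
by rewrite eqxx; exact: (IH a.+1).
Qed.

Definition onesL n m (f : Hvert n m.+1 -> int) (t : nat) : {set 'I_n} :=
  [set x | f (inord t, x) == 1].
Definition ppL n m (f : Hvert n m.+1 -> int) t := #|onesL f t|.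
Definition ccL n m (f : Hvert n m.+1 -> int) t := (\sum_(t' < t) ppL f t')%N.
Definition sigL n m (f : Hvert n m.+1 -> int) (hn : (0 < n)%N) (i : 'I_m.+1) : 'I_n -> 'I_n :=
  mfun [set j in Rseq hn (ccL f i) (ppL f i)] (onesL f i).
Definition pathL n m (f : Hvert n m.+1 -> int) (hn : (0 < n)%N) (j : 'I_n) : seq (Hvert n m.+1) :=
  [seq (i, sigL f hn i j) | i <- enum 'I_m.+1].

Lemma ppL_le n m (f : Hvert n m.+1 -> int) t : (ppL f t <= n)%N.
Proof. by have := max_card (onesL f t); rewrite card_ord. Qed.

Lemma count_ccL n m (f : Hvert n m.+1 -> int) (P : pred nat) L :
  (\sum_(t < L) count P (iota (ccL f t) (ppL f t)))%N = count P (iota 0 (ccL f L)).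
Proof.
elim: L => [|L IH]; first by rewrite big_ord0 /ccL big_ord0.
have -> : ccL f L.+1 = (ccL f L + ppL f L)%N by rewrite /ccL big_ord_recr.
by rewrite big_ord_recr /= IH iotaD count_cat.
Qed.

Theorem corollary4p5 (m n : nat) (hm : (0 < m)%N) (hn : (0 < n)%N)
    (f : Hvert n m -> int) (hf : forall v, f v = 1 \/ f v = -1) :
  let q : rat := (\sum_(v : Hvert n m) f v)%:~R / n%:R in
  let k : int := Num.ceil q in
  exists P : 'I_n -> seq (Hvert n m),
    dpath_decomposition P /\
    forall j : 'I_n,
      let s := \sum_(v <- P j) f v in
      if (m%:Z == k %[mod 2])%Z then (s == k - 2) || (s == k)
      else (s == k - 1) || (s == k + 1).
Proof.
move: hm f hf; case: m => // m _ f hf q k.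
exists (pathL f hn); split.
  split.
  - move=> j; rewrite /is_dpath size_map size_enum_ord eqxx /=.
    rewrite map_inj_uniq ?enum_uniq; last by move=> i i' [].
    rewrite sorted_map.
    have := iota_succ 0 m.+1; rewrite -val_enum_ord sorted_map.
    by [].
  - move=> j j' v hjj /mapP[i _ ->]; apply/negP => /mapP[i' _ [e1 e2]].
    move: e2; rewrite -e1 => /mfun_inj e2.
    by rewrite e2 eqxx in hjj.
  - move=> [i x].
    have [g _ Kg] := injF_bij (@mfun_inj _ [set j in Rseq hn (ccL f i) (ppL f i)] (onesL f i)).
    exists (g x); apply/mapP; exists i; first by rewrite mem_enum.
    by rewrite /sigL Kg.
move=> j /=; set s := \sum_(v <- pathL f hn j) f v.
set C := ccL f m.+1.
have hcard i : #|[set j0 in Rseq hn (ccL f i) (ppL f i)]| = #|onesL f i|.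
  by rewrite card_Rseq // ppL_le.
have fi (i : 'I_m.+1) : f (i, sigL f hn i j) =
    (nat_of_bool (j \in Rseq hn (ccL f i) (ppL f i)))%:Z * 2 - 1.
  have := mfun_mem j (hcard i); rewrite -/(sigL f hn i j) !inE inord_val.
  by case: (hf (i, sigL f hn i j)) => ->; case: (j \in _) => //= /eqP.
have hs : s = (C %/ n + (j < C %% n))%N%:Z * 2 - (m.+1)%:Z.
  rewrite /s /pathL big_map big_enum /=.
  under eq_bigr => i _ do rewrite fi.
  rewrite sum_aux card_ord; congr (_ * _ - _); last by lia.
  congr Posz.
  under eq_bigr => i _ do rewrite mem_Rseq ?ppL_le //.
  by rewrite count_ccL count_mod.
have fx (i : 'I_m.+1) (x : 'I_n) : f (i, x) = (nat_of_bool (x \in onesL f i))%:Z * 2 - 1.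
  rewrite inE inord_val.
  by case: (hf (i, x)) => ->.
have hS : \sum_(v : Hvert n m.+1) f v = C%:Z * 2 - (n * m.+1)%N%:Z.
  have -> : \sum_(v : Hvert n m.+1) f v = \sum_(i < m.+1) \sum_(x < n) f (i, x).
    by rewrite pair_big; apply: eq_bigr => -[i x].
  under eq_bigr => i _ do rewrite (eq_bigr _ (fun x _ => fx i x)) sum_aux card_ord.
  rewrite sum_aux card_ord.
  have -> : (\sum_(i < m.+1) \sum_(i0 < n) nat_of_bool (i0 \in onesL f i))%N = C.
    rewrite /C /ccL; apply: eq_bigr => i _; rewrite /ppL -sum1_card [RHS]big_mkcond /=.
    by apply: eq_bigr => x _; case: (x \in _).
  lia.
have hn' : (0 : rat) < n%:R by rewrite ltr0n.
have := ceil_itv q; rewrite -/k /q => /andP[h1 h2].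
move: h1 h2; rewrite ltr_pdivlMr // ler_pdivrMr // pmulrn -!intrM ltr_int ler_int hS.
have eC := divn_eq C n; have hb := ltn_pmod C hn.
move: hs eC hb; set a := (C %/ n)%N; set b := (C %% n)%N; set c := (j < b)%N.
move=> hs eC hb h1 h2.
have hc : (c <= 1)%N by case: (c).
set d : int := k - (a%:Z * 2 - m.+1%:Z).
have e1 : n%:Z * (d - 1) < b%:Z * 2 by rewrite /d; nia.
have e2 : b%:Z * 2 <= n%:Z * d by rewrite /d; nia.
have hd : 0 <= d <= 2 by apply/andP; split; nia.
have hd0 : d = 0 -> b = 0%N by move=> hd0; rewrite hd0 in e1 e2; nia.
have hd2 : d = 0 -> c = false by move=> /hd0 hb0; rewrite /c hb0.
have ek : k = d + (a%:Z * 2 - m.+1%:Z) by rewrite /d subrK.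
clearbody d.
rewrite hs ek; clear -hd hd2 hc.
case: ifP => H; lia.
Qed.
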